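(* For all integers $n\geq 0$ and $i\geq 1$, $$\bar a_{3i+2}(3n+2)\equiv 0 \pmod 3.$$
   Context: For $|q|<1$ and integers $m\geq 1$, write $f_m:=\prod_{j\geq 1}(1-q^{jm})$. For an integer $c\geq 1$, the generalized overcubic partition function $\bar a_c(n)$ is defined by $$\sum_{n\geq 0}\bar a_c(n)q^n=\frac{f_4^{c-1}}{f_1^2f_2^{2c-3}}.$$ *)

(* Defs.v *)
From HB Require Import structures.
From mathcomp Require Import all_boot all_order all_algebra.
Set Implicit Arguments. Unset Strict Implicit. Unset Printing Implicit Defensive.
Import Order.TTheory GRing.Theory Num.Theory.
Local Open Scope ring_scope.

(* Truncations of the q-series f_m = prod_{j>=1} (1 - q^{jm}) and of 1/f_m,
   as integer polynomials that agree with the true series modulo q^(N+1). *)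
Definition f_trunc (m N : nat) : {poly int} :=
  \prod_(1 <= j < N.+1) (1 - 'X^(j * m)).

(* 1/(1 - q^{jm}) = sum_k q^{jmk}, truncated *)
Definition finv_trunc (m N : nat) : {poly int} :=
  \prod_(1 <= j < N.+1) \sum_(k < N.+1) 'X^(j * m * k).

(* f_2^{-(2c-3)} : the exponent 2c-3 is an integer, negative only for c = 1. *)
Definition f2_factor (c N : nat) : {poly int} :=
  if (3 <= 2 * c)%N then finv_trunc 2 N ^+ (2 * c - 3)
  else f_trunc 2 N ^+ (3 - 2 * c).

(* generalized overcubic partition function: the coefficient of q^n in
   f_4^{c-1} / (f_1^2 f_2^{2c-3}). *)
Definition abar (c n : nat) : int :=
  (f_trunc 4 n ^+ (c - 1) * finv_trunc 1 n ^+ 2 * f2_factor c n)`_n.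

(* Main.v *)
Require Import Defs.
From mathcomp Require Import all_boot all_order all_algebra.
From mathcomp Require Import zify ring.
Import GRing.Theory.
Local Open Scope ring_scope.

Definition cong (M : nat) (p r : {poly int}) :=
  exists a b : {poly int}, p - r = 3 * a + 'X^M * b.

Lemma cong_eqE (p r d : {poly int}) : p - r = d -> p = d + r.
Proof. by move=> <-; rewrite subrK. Qed.

Lemma cong_refl M p : cong M p p.
Proof. by exists 0, 0; rewrite subrr !mulr0 addr0. Qed.

Lemma cong_eq M p r : p = r -> cong M p r.
Proof. by move=> ->; apply: cong_refl. Qed.

Lemma cong_sym M p r : cong M p r -> cong M r p.
Proof.
case=> a [b] /cong_eqE ->; exists (-a), (-b); ring.
Qed.

Lemma cong_trans M p q r : cong M p q -> cong M q r -> cong M p r.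
Proof.
case=> a [b] /cong_eqE -> [a' [b' /cong_eqE ->]].
exists (a + a'), (b + b'); ring.
Qed.

Lemma congD M p1 r1 p2 r2 : cong M p1 r1 -> cong M p2 r2 -> cong M (p1 + p2) (r1 + r2).
Proof.
case=> a [b] /cong_eqE -> [a' [b' /cong_eqE ->]].
exists (a + a'), (b + b'); ring.
Qed.

Lemma congM M p1 r1 p2 r2 : cong M p1 r1 -> cong M p2 r2 -> cong M (p1 * p2) (r1 * r2).
Proof.
case=> a [b] /cong_eqE -> [a' [b' /cong_eqE ->]].
exists (a * (3 * a' + 'X^M * b' + r2) + r1 * a'),
       (b * (3 * a' + 'X^M * b' + r2) + r1 * b'); ring.
Qed.

Lemma congX M p r k : cong M p r -> cong M (p ^+ k) (r ^+ k).
Proof.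
move=> H; elim: k => [|k IH]; first exact: cong_refl.
by rewrite !exprS; apply: congM.
Qed.

Lemma cong_prod M (I : Type) (s : seq I) (P : pred I) (F G : I -> {poly int}) :
  (forall i, P i -> cong M (F i) (G i)) ->
  cong M (\prod_(i <- s | P i) F i) (\prod_(i <- s | P i) G i).
Proof.
move=> H; apply: (big_ind2 (cong M)) => //; first exact: cong_refl.
by move=> *; apply: congM.
Qed.

Lemma cong_sum M (I : Type) (s : seq I) (P : pred I) (F G : I -> {poly int}) :
  (forall i, P i -> cong M (F i) (G i)) ->
  cong M (\sum_(i <- s | P i) F i) (\sum_(i <- s | P i) G i).
Proof.
move=> H; apply: (big_ind2 (cong M)) => //; first exact: cong_refl.
by move=> *; apply: congD.
Qed.

Lemma cong_prod_nat M (a b : nat) (F G : nat -> {poly int}) :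
  (forall i, (a <= i < b)%N -> cong M (F i) (G i)) ->
  cong M (\prod_(a <= i < b) F i) (\prod_(a <= i < b) G i).
Proof.
move=> H; rewrite big_nat_cond [X in cong _ _ X]big_nat_cond.
by apply: cong_prod => i /andP[Hi _]; apply: H.
Qed.

Lemma cong_sum_nat M (a b : nat) (F G : nat -> {poly int}) :
  (forall i, (a <= i < b)%N -> cong M (F i) (G i)) ->
  cong M (\sum_(a <= i < b) F i) (\sum_(a <= i < b) G i).
Proof.
move=> H; rewrite big_nat_cond [X in cong _ _ X]big_nat_cond.
by apply: cong_sum => i /andP[Hi _]; apply: H.
Qed.

Lemma cong_Xn0 M k b : (M <= k)%N -> cong M ('X^k * b) 0.
Proof.
move=> Hk; exists 0, ('X^(k - M) * b).
by rewrite subr0 mulr0 add0r mulrA -exprD subnKC.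
Qed.

Lemma cong_coef M p r k : cong M p r -> (k < M)%N -> (3 %| p`_k - r`_k)%Z.
Proof.
case=> a [b] H Hk; rewrite -coefB H coefD coefXnM Hk addr0.
rewrite (mulr_natl a 3) coefMn; apply/dvdzP; exists a`_k; by rewrite mulr_natr.
Qed.

Definition PN (M : nat) (S : {poly int}) :=
  forall k, (k < M)%N -> (k %% 3 = 2)%N -> (3 %| S`_k)%Z.

Lemma PN_cong M S T : cong M S T -> PN M T -> PN M S.
Proof.
move=> H HT k Hk Hk3.
have -> : S`_k = (S`_k - T`_k) + T`_k by rewrite subrK.
by rewrite rpredD //; [apply: cong_coef H Hk | apply: HT].
Qed.

Lemma PN_comp3 M U S : PN M S -> PN M ((U \Po 'X^3) * S).
Proof.
move=> HS k Hk Hk3; rewrite coefM; apply: rpred_sum => j _.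
rewrite coef_comp_poly_Xn //; case: ifP => Hj; last by rewrite mul0r rpred0.
apply: dvdz_mull; apply: HS.
  by have := ltn_ord j; lia.
have := ltn_ord j; move: Hj Hk3; lia.
Qed.


Lemma int_cube3 (c : int) : exists t : int, c ^+ 3 - c = 3 * t.
Proof.
have Hc := divz_eq c 3.
have H0 : (0 <= (c %% 3)%Z)%R by apply: modz_ge0.
have H1 : ((c %% 3)%Z < 3)%R by apply: ltz_pmod.
set q := (c %/ 3)%Z in Hc; set r := (c %% 3)%Z in Hc H0 H1.
have : r = 0 \/ r = 1 \/ r = 2 by lia.
case=> [Hr|[Hr|Hr]]; rewrite Hc Hr.
- by exists (9 * q ^+ 3 - q); ring.
- by exists (9 * q ^+ 3 + 9 * q ^+ 2 + 2 * q); ring.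
- by exists (9 * q ^+ 3 + 18 * q ^+ 2 + 11 * q + 2); ring.
Qed.

Lemma frob (p : {poly int}) : exists a, p ^+ 3 - (p \Po 'X^3) = 3 * a.
Proof.
elim/poly_ind: p => [|p c [a Ha]].
  by exists 0; rewrite comp_poly0 expr0n /= subrr mulr0.
have [t Ht] := int_cube3 c.
have HC : c%:P ^+ 3 - c%:P = 3 * t%:P.
  by rewrite -rmorphXn -rmorphB /= Ht rmorphM /= rmorph_nat.
rewrite comp_poly_MXaddC.
move/cong_eqE: Ha => Ha.
have -> : p \Po 'X^3 = p ^+ 3 - 3 * a by rewrite Ha; ring.
exists (a * 'X^3 + p ^+ 2 * 'X ^+ 2 * c%:P + p * 'X * c%:P ^+ 2 + t%:P).
apply/eqP; rewrite -subr_eq0; apply/eqP.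
transitivity (c%:P ^+ 3 - c%:P - 3 * t%:P); first ring.
by rewrite HC subrr.
Qed.

Lemma cong_frob M p : cong M (p ^+ 3) (p \Po 'X^3).
Proof. by have [a Ha] := frob p; exists a, 0; rewrite Ha mulr0 addr0. Qed.

Lemma PN_add M S T : PN M S -> PN M T -> PN M (S + T).
Proof. by move=> HS HT k Hk H3; rewrite coefD rpredD //; [apply: HS|apply: HT]. Qed.

Lemma PN_opp M S : PN M S -> PN M (- S).
Proof. by move=> HS k Hk H3; rewrite coefN rpredN; apply: HS. Qed.

Lemma PN_sign M S n : PN M S -> PN M ((-1) ^+ n * S).
Proof.
move=> HS; rewrite -signr_odd; case: (odd n); rewrite ?expr1 ?expr0 ?mulN1r ?mul1r //.
exact: PN_opp.
Qed.

Lemma PN_sum M (I : Type) (s : seq I) (P : pred I) (F : I -> {poly int}) :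
  (forall i, P i -> PN M (F i)) -> PN M (\sum_(i <- s | P i) F i).
Proof.
move=> H; apply: (big_ind (PN M)) => //; last exact: PN_add.
by move=> k _ _; rewrite coef0 rpred0.
Qed.

Lemma PN_Xn M e : (e %% 3 != 2)%N -> PN M 'X^e.
Proof.
move=> He k Hk H3; rewrite coefXn; case: eqP => [Hke|_]; last by rewrite rpred0.
by move: He; rewrite -Hke H3.
Qed.

Lemma PN_0 M : PN M 0.
Proof. by move=> k _ _; rewrite coef0 rpred0. Qed.

Lemma geom_trunc (a N : nat) :
  (1 - 'X^a) * \sum_(k < N.+1) 'X^(a * k) = 1 - 'X^(a * N.+1) :> {poly int}.
Proof.
elim: N => [|N IH]; first by rewrite big_ord1 muln0 expr0 mulr1 muln1.
rewrite big_ord_recr /= mulrDr IH mulrBl mul1r -exprD.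
have -> : (a + a * N.+1 = a * N.+2)%N by ring.
by rewrite addrA subrK.
Qed.

Lemma cong_1X M K : (M <= K)%N -> cong M (1 - 'X^K) 1.
Proof.
move=> HK; exists 0, (- 'X^(K - M)).
by rewrite mulrN -exprD subnKC // mulr0 add0r addrC addKr.
Qed.

Lemma finv_f (m N M : nat) : (0 < m)%N -> (M <= m * N.+1)%N ->
  cong M (f_trunc m N * finv_trunc m N) 1.
Proof.
move=> Hm HM; rewrite /f_trunc /finv_trunc -big_split /=.
apply: cong_trans (_ : cong M (\prod_(1 <= j < N.+1) (1 : {poly int})) 1); last first.
  by rewrite big1_eq; apply: cong_refl.
apply: cong_prod_nat => j /andP[Hj _].
rewrite geom_trunc; apply: cong_1X.
by rewrite -mulnA; apply: leq_trans HM (leq_pmull _ _).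
Qed.

Lemma f_trunc_ext_le d K L M : (L <= K)%N -> (M <= d * L.+1)%N ->
  cong M (f_trunc d K) (f_trunc d L).
Proof.
move=> HLK HM; rewrite /f_trunc (big_cat_nat _ (n := L.+1)) //=.
rewrite -[X in cong _ _ X]mulr1; apply: congM; first exact: cong_refl.
apply: cong_trans (_ : cong M (\prod_(L.+1 <= j < K.+1) (1 : {poly int})) 1); last first.
  by rewrite big1_eq; apply: cong_refl.
apply: cong_prod_nat => j /andP[Hj _]; apply: cong_1X.
apply: leq_trans HM _; rewrite mulnC leq_mul2r; apply/orP; right; exact: Hj.
Qed.

Lemma f_trunc_ext d K L M : (M <= d * (minn K L).+1)%N ->
  cong M (f_trunc d K) (f_trunc d L).
Proof.
case: (leqP L K) => H.
  by apply: f_trunc_ext_le.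
move=> HM; apply: cong_sym; apply: f_trunc_ext_le => //.
exact: ltnW.
Qed.

Fixpoint qb (p : {poly int}) (N m : nat) {struct N} : {poly int} :=
  match N, m with
  | _, 0 => 1
  | 0, _.+1 => 0
  | N'.+1, m'.+1 => qb p N' m' + p ^+ m'.+1 * qb p N' m'.+1
  end.

Lemma qb_gt p N m : (N < m)%N -> qb p N m = 0.
Proof.
elim: N m => [|N IH] [|m] //= H.
by rewrite !IH ?mulr0 ?addr0 //; apply: ltnW.
Qed.

Lemma qb_0 p N : qb p N 0 = 1.
Proof. by case: N. Qed.

Definition qpoch (p : {poly int}) L := \prod_(1 <= j < L.+1) (1 - p ^+ j).

Lemma qpoch0 p : qpoch p 0 = 1.
Proof. by rewrite /qpoch big_geq. Qed.

Lemma qpochS p L : qpoch p L.+1 = qpoch p L * (1 - p ^+ L.+1).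
Proof. by rewrite /qpoch big_nat_recr. Qed.

Lemma qb_prod p N m : (m <= N)%N ->
  qb p N m * qpoch p m * qpoch p (N - m) = qpoch p N.
Proof.
elim: N m => [|N IH] [|m] //= H.
- by rewrite qpoch0 !mul1r.
- by rewrite qpoch0 !mul1r.
rewrite subSS.
have H1 := IH m H.
case: (ltnP m N) => Hm.
  have H2 := IH m.+1 Hm.
  have E : (N - m = (N - m.+1).+1)%N by lia.
  have ER : qpoch p (N - m) = qpoch p (N - m.+1) * (1 - p ^+ (N - m)).
    by rewrite {1}E qpochS -E.
  have EP : p ^+ m.+1 * p ^+ (N - m) = p ^+ N.+1.
    by rewrite -exprD; congr (_ ^+ _); lia.
  transitivity (qb p N m * qpoch p m * qpoch p (N - m) * (1 - p ^+ m.+1)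
     + p ^+ m.+1 * (qb p N m.+1 * qpoch p m.+1 * qpoch p (N - m.+1)) * (1 - p ^+ (N - m))).
    by rewrite (qpochS p m) ER; ring.
  by rewrite H1 H2 qpochS -EP; ring.
have Em : m = N by apply/eqP; rewrite eqn_leq Hm andbT.
subst m; rewrite (@qb_gt p N N.+1 (ltnSn N)) mulr0 addr0 subnn qpoch0 mulr1.
move: H1; rewrite subnn qpoch0 mulr1 => H1.
by rewrite !qpochS mulrA H1.
Qed.

Lemma qpoch_X d L : qpoch 'X^d L = f_trunc d L.
Proof. by apply: eq_bigr => j _; rewrite -exprM mulnC. Qed.

Lemma f_trunc_ext2 d K L M : (M <= d * K.+1)%N -> (M <= d * L.+1)%N ->
  cong M (f_trunc d K) (f_trunc d L).
Proof. by move=> HK HL; apply: f_trunc_ext; case: (leqP K L). Qed.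

Lemma qb_lim d N m L M : (0 < d)%N -> (m <= N)%N ->
  (M <= d * m.+1)%N -> (M <= d * (N - m).+1)%N -> (M <= d * L.+1)%N ->
  cong M (qb 'X^d N m * f_trunc d L) 1.
Proof.
move=> Hd HmN H1 H2 HL.
have HN : (M <= d * N.+1)%N.
  by apply: leq_trans H1 _; rewrite leq_mul2l ltnS HmN orbT.
set W := f_trunc d m.
have HV := @finv_f d m M Hd H1.
have HP := @qb_prod 'X^d N m HmN; rewrite !qpoch_X in HP.
apply: cong_trans (_ : cong M (qb 'X^d N m * W) 1).
  by apply: congM; [apply: cong_refl | apply: f_trunc_ext2].
apply: cong_trans (_ : cong M (qb 'X^d N m * W * (W * finv_trunc d m)) 1).
  by rewrite -{1}[_ * W]mulr1; apply: congM; [apply: cong_refl | apply: cong_sym].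
apply: cong_trans (_ : cong M (W * finv_trunc d m) 1) => //.
rewrite mulrA; apply: congM; last exact: cong_refl.
apply: cong_trans (_ : cong M (f_trunc d N) W); last exact: f_trunc_ext2.
rewrite -HP; apply: congM; first exact: cong_refl.
exact: f_trunc_ext2.
Qed.

Lemma cauchy (p y z : {poly int}) N :
  \prod_(0 <= i < N) (y + z * p ^+ i) =
  \sum_(0 <= m < N.+1) qb p N m * p ^+ 'C(m, 2) * z ^+ m * y ^+ (N - m).
Proof.
elim: N z => [|N IH] z.
  by rewrite big_geq // big_nat1 /= !expr0 !mulr1.
rewrite big_nat_recl //.
rewrite (eq_bigr (fun i => y + (z * p) * p ^+ i)); last first.
  by move=> i _; rewrite exprS mulrA.
rewrite IH expr0 mulr1 mulrDl.
rewrite [RHS]big_nat_recl // /=.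
rewrite [in RHS](eq_bigr (fun i => qb p N i * p ^+ 'C(i.+1, 2) * z ^+ i.+1 * y ^+ (N - i)
   + p ^+ i.+1 * qb p N i.+1 * p ^+ 'C(i.+1, 2) * z ^+ i.+1 * y ^+ (N - i))); last first.
  by move=> i _; rewrite subSS; ring.
rewrite big_split /=.
have Hz : z * \sum_(0 <= m < N.+1) qb p N m * p ^+ 'C(m, 2) * (z * p) ^+ m * y ^+ (N - m)
   = \sum_(0 <= i < N.+1) qb p N i * p ^+ 'C(i.+1, 2) * z ^+ i.+1 * y ^+ (N - i).
  rewrite mulr_sumr; apply: eq_bigr => i _.
  by rewrite binS bin1 exprD exprMn exprS; ring.
have Hy : y * \sum_(0 <= m < N.+1) qb p N m * p ^+ 'C(m, 2) * (z * p) ^+ m * y ^+ (N - m)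
   = y ^+ N.+1 + \sum_(0 <= i < N.+1) p ^+ i.+1 * qb p N i.+1 * p ^+ 'C(i.+1, 2) * z ^+ i.+1 * y ^+ (N - i).
  rewrite big_nat_recl // [in RHS]big_nat_recr //= (@qb_gt p N N.+1 (ltnSn N)) mulr0 !mul0r addr0.
  rewrite mulrDr subn0 !expr0 !mulr1 qb_0 mul1r -exprS; congr (_ + _).
  rewrite mulr_sumr; apply: eq_big_nat => i /andP[_ Hi].
  by rewrite -(subnSK Hi) (exprS y) exprMn; ring.
rewrite Hz Hy subn0 !expr0 !mul1r ?mulr1; ring.
Qed.

Definition ee (m n : nat) : nat :=
  if (n <= m)%N then (2 * (m - n) * (m - n) + (m - n))%N
  else (2 * (n - m - 1) * (n - m - 1) + 3 * (n - m - 1) + 1)%N.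

Lemma bin2_id m : ('C(m, 2) * 2 + m = m * m)%N.
Proof.
elim: m => [|m IH] //; rewrite binS bin1; nia.
Qed.

Lemma expo n m : (m <= 2 * n)%N ->
  (4 * 'C(m, 2) + 4 * m + (4 * n + 1) * (2 * n - m) = 6 * n * n + 3 * n + ee m n)%N.
Proof.
move=> Hm; have HC := bin2_id m; rewrite /ee; case: leqP => H.
- have [k Hk] : exists k, m = (n + k)%N by exists (m - n)%N; lia.
  have [s Hs] : exists s, n = (k + s)%N by exists (n - k)%N; lia.
  subst m n.
  have -> : (2 * (k + s) - (k + s + k) = s)%N by lia.
  have -> : (k + s + k - (k + s) = k)%N by lia.
  nia.
- have [t Ht] : exists t, n = (m + t + 1)%N by exists (n - m - 1)%N; lia.
  subst n.
  have -> : (2 * (m + t + 1) - m = m + 2 * t + 2)%N by lia.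
  have -> : (m + t + 1 - m - 1 = t)%N by lia.
  nia.
Qed.

Lemma ee_mod m n : (ee m n %% 3 != 2)%N.
Proof.
rewrite /ee; case: leqP => _.
- move: (m - n)%N => k. have Hk := divn_eq k 3.
  have Hr : (k %% 3 < 3)%N by apply: ltn_pmod.
  move: Hk Hr; move: (k %/ 3)%N (k %% 3)%N => q r -> Hr.
  have -> : (2 * (q * 3 + r) * (q * 3 + r) + (q * 3 + r) = (6 * q * q + 4 * q * r + q) * 3 + (2 * r * r + r))%N by ring.
  rewrite modnMDl; case: r Hr => [|[|[|r]]] //.
- move: (n - m - 1)%N => k. have Hk := divn_eq k 3.
  have Hr : (k %% 3 < 3)%N by apply: ltn_pmod.
  move: Hk Hr; move: (k %/ 3)%N (k %% 3)%N => q r -> Hr.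
  have -> : (2 * (q * 3 + r) * (q * 3 + r) + 3 * (q * 3 + r) + 1 = (6 * q * q + 4 * q * r + 3 * q + r) * 3 + (2 * r * r + 1))%N by ring.
  rewrite modnMDl; case: r Hr => [|[|[|r]]] //.
Qed.

Definition O1 n : {poly int} := \prod_(0 <= j < n) (1 - 'X^(4 * j + 1)).
Definition O3 n : {poly int} := \prod_(0 <= j < n) (1 - 'X^(4 * j + 3)).

Lemma sum4 n : (\sum_(0 <= i < n) 4 * i.+1 = 2 * n * n.+1)%N.
Proof.
elim: n => [|n IH]; first by rewrite big_geq.
by rewrite big_nat_recr //= IH; ring.
Qed.

Lemma refl_prod n :
  \prod_(0 <= i < 2 * n) ('X^(4 * n + 1) + (- 'X^4) * ('X^4) ^+ i) =
  (-1) ^+ n * 'X^(6 * n * n + 3 * n) * (O1 n * O3 n) :> {poly int}.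
Proof.
rewrite (big_cat_nat _ (n := n)) //=; last by lia.
have HA : \prod_(0 <= i < n) ('X^(4 * n + 1) + (- 'X^4) * ('X^4) ^+ i) =
   (-1) ^+ n * 'X^(2 * n * n.+1) * O1 n :> {poly int}.
  rewrite (eq_big_nat _ _ (F2 := fun i => (-1) * 'X^(4 * i.+1) * (1 - 'X^(4 * (n - i.+1) + 1)))); last first.
    move=> i /andP[_ Hi]; rewrite mulrBr mulr1 -mulrA -exprD.
    have -> : (4 * i.+1 + (4 * (n - i.+1) + 1) = 4 * n + 1)%N by lia.
    by rewrite -exprM mulnS (exprD _ 4); ring.
  rewrite big_split /= [X in X * _]big_split /= prodr_const_nat subn0 -sum4 -prodrXr /O1.
  congr (_ * _); rewrite big_nat_rev /=.
  by apply: eq_big_nat => i /andP[_ Hi]; rewrite add0n; congr (1 - 'X^(_)); lia.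
have HB : \prod_(n <= i < 2 * n) ('X^(4 * n + 1) + (- 'X^4) * ('X^4) ^+ i) =
   'X^(n * (4 * n + 1)) * O3 n :> {poly int}.
  rewrite -{1}[n]add0n big_addn.
  rewrite (eq_big_nat _ _ (F2 := fun i => 'X^(4 * n + 1) * (1 - 'X^(4 * i + 3)))); last first.
    move=> i /andP[_ Hi]; rewrite mulrBr mulr1 mulNr -exprM -!exprD.
    by congr (_ - 'X^(_)); lia.
  rewrite big_split /= prodr_const_nat subn0 -exprM.
  have -> : (2 * n - n = n)%N by lia.
  by rewrite mulnC.
rewrite HA HB.
have -> : (6 * n * n + 3 * n = 2 * n * n.+1 + n * (4 * n + 1))%N by ring.
rewrite exprD; ring.
Qed.

Lemma jtp n : (-1) ^+ n * (O1 n * O3 n) =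
  \sum_(0 <= m < (2 * n).+1) (-1) ^+ m * qb 'X^4 (2 * n) m * 'X^(ee m n) :> {poly int}.
Proof.
have HX : 'X^(6 * n * n + 3 * n) != 0 :> {poly int} by rewrite expf_neq0 // polyX_eq0.
apply: (mulfI HX); rewrite mulrA (mulrC 'X^_) -refl_prod cauchy mulr_sumr.
apply: eq_big_nat => m /andP[_ Hm]; rewrite ltnS in Hm.
rewrite -!exprM (exprNn 'X^4) -exprM.
transitivity ((-1) ^+ m * qb 'X^4 (2 * n) m * ('X^(4 * 'C(m, 2)) * 'X^(4 * m) * 'X^((4 * n + 1) * (2 * n - m)))); first ring.
rewrite -!exprD expo // exprD; ring.
Qed.

Lemma ee_ge m n : (n - m <= ee m n)%N /\ (m - n <= ee m n)%N.
Proof.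
rewrite /ee; case: (leqP n m) => H.
  have -> : (n - m = 0)%N by lia.
  by split => //; move: (m - n)%N => k; nia.
have -> : (m - n = 0)%N by lia.
split => //; have -> : (n - m = (n - m - 1).+1)%N by lia.
by move: (n - m - 1)%N => k; nia.
Qed.

Lemma PN_sum_nat M (a b : nat) (F : nat -> {poly int}) :
  (forall i, (a <= i < b)%N -> PN M (F i)) -> PN M (\sum_(a <= i < b) F i).
Proof.
move=> H; rewrite big_nat_cond; apply: PN_sum => i /andP[Hi _]; exact: H.
Qed.

Lemma PN_O (Nt : nat) :
  PN Nt.+1 (O1 (2 * Nt.+1) * O3 (2 * Nt.+1) * f_trunc 4 Nt).
Proof.
set M := Nt.+1; set n := (2 * M)%N.
have E : O1 n * O3 n = (-1) ^+ n *
   \sum_(0 <= m < (2 * n).+1) (-1) ^+ m * qb 'X^4 (2 * n) m * 'X^(ee m n).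
  by rewrite -jtp signrMK.
rewrite E -mulrA mulr_suml; apply: PN_sign; apply: PN_sum_nat => m /andP[_ Hm].
rewrite ltnS in Hm.
have [G1 G2] := ee_ge m n.
case: (leqP M (ee m n)) => He.
  apply: (@PN_cong _ _ 0); last exact: PN_0.
  have -> : (-1) ^+ m * qb 'X^4 (2 * n) m * 'X^(ee m n) * f_trunc 4 Nt =
     'X^(ee m n) * ((-1) ^+ m * qb 'X^4 (2 * n) m * f_trunc 4 Nt) by ring.
  exact: cong_Xn0.
apply: (@PN_cong _ _ ((-1) ^+ m * 'X^(ee m n))); last first.
  by apply: PN_sign; apply: PN_Xn; apply: ee_mod.
have -> : (-1) ^+ m * qb 'X^4 (2 * n) m * 'X^(ee m n) * f_trunc 4 Nt =
   ((-1) ^+ m * 'X^(ee m n)) * (qb 'X^4 (2 * n) m * f_trunc 4 Nt) by ring.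
rewrite -[X in cong _ _ X]mulr1; apply: congM; first exact: cong_refl.
apply: qb_lim => //; rewrite /n /M in G1 G2 He Hm *; lia.
Qed.

Lemma f_truncS d L : f_trunc d L.+1 = f_trunc d L * (1 - 'X^(L.+1 * d)).
Proof. by rewrite /f_trunc big_nat_recr. Qed.

Lemma split4 n : f_trunc 1 (4 * n) = f_trunc 2 (2 * n) * (O1 n * O3 n).
Proof.
elim: n => [|n IH]; first by rewrite /f_trunc /O1 /O3 !big_geq // !mulr1.
have -> : (4 * n.+1 = (4 * n).+4)%N by lia.
have -> : (2 * n.+1 = (2 * n).+2)%N by lia.
rewrite (f_truncS 1 (4 * n).+3) (f_truncS 1 (4 * n).+2) (f_truncS 1 (4 * n).+1).
rewrite (f_truncS 1 (4 * n)) (f_truncS 2 (2 * n).+1) (f_truncS 2 (2 * n)) IH.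
rewrite /O1 /O3 !big_nat_recr //=.
have -> : ((4 * n).+1 * 1 = 4 * n + 1)%N by lia.
have -> : ((4 * n).+3 * 1 = 4 * n + 3)%N by lia.
have -> : ((4 * n).+2 * 1 = (2 * n).+1 * 2)%N by lia.
have -> : ((4 * n).+4 * 1 = (2 * n).+2 * 2)%N by lia.
ring.
Qed.

Lemma main_aux (n i : nat) (hi : (1 <= i)%N) :
  (3 %| abar (3 * i + 2)%N (3 * n + 2)%N)%Z.
Proof.
rewrite /abar /f2_factor.
have -> : (3 <= 2 * (3 * i + 2))%N = true by lia.
have -> : (3 * i + 2 - 1 = i * 3 + 1)%N by lia.
have -> : (2 * (3 * i + 2) - 3 = 2 * i * 3 + 1)%N by lia.
set Nt := (3 * n + 2)%N.
set F4 := f_trunc 4 Nt; set I1 := finv_trunc 1 Nt; set I2 := finv_trunc 2 Nt.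
set F1 := f_trunc 1 Nt; set F2 := f_trunc 2 Nt.
suff HP : PN Nt.+1 (F4 ^+ (i * 3 + 1) * I1 ^+ 2 * I2 ^+ (2 * i * 3 + 1)).
  by apply: HP => //; rewrite /Nt; lia.
set V := F4 ^+ i * I2 ^+ (2 * i).
have HA : F4 ^+ (i * 3 + 1) * I1 ^+ 2 * I2 ^+ (2 * i * 3 + 1) =
   V ^+ 3 * (F4 * I1 ^+ 2 * I2).
  by rewrite /V exprMn -!exprM !exprD !expr1; ring.
rewrite HA.
apply: (@PN_cong _ _ ((V \Po 'X^3) * (F4 * I1 ^+ 2 * I2))).
  by apply: congM; [apply: cong_frob | apply: cong_refl].
apply: PN_comp3.
have H1 : cong Nt.+1 (F1 * I1) 1 by apply: finv_f => //; lia.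
apply: (@PN_cong _ _ ((I1 \Po 'X^3) * (F1 * F4 * I2))).
  apply: (@cong_trans _ _ (I1 ^+ 3 * (F1 * F4 * I2))); last first.
    by apply: congM; [apply: cong_frob | apply: cong_refl].
  apply: (@cong_trans _ _ (F4 * I1 ^+ 2 * I2 * (F1 * I1))).
    by rewrite -{1}[_ * I2]mulr1; apply: congM; [apply: cong_refl | apply: cong_sym].
  by apply: cong_eq; ring.
apply: PN_comp3.
set n' := (2 * Nt.+1)%N.
apply: (@PN_cong _ _ (O1 n' * O3 n' * F4)); last exact: PN_O.
have H2 : cong Nt.+1 F1 (f_trunc 1 (4 * n')) by apply: f_trunc_ext2; rewrite /n'; lia.
have H3 : cong Nt.+1 (f_trunc 2 (2 * n')) F2 by apply: f_trunc_ext2; rewrite /n'; lia.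
have H4 : cong Nt.+1 (F2 * I2) 1 by apply: finv_f => //; lia.
apply: (@cong_trans _ _ (f_trunc 1 (4 * n') * F4 * I2)).
  by apply: congM => //; [apply: congM => //; apply: cong_refl | apply: cong_refl].
rewrite split4.
apply: (@cong_trans _ _ (O1 n' * O3 n' * F4 * (F2 * I2))).
  have -> : f_trunc 2 (2 * n') * (O1 n' * O3 n') * F4 * I2 =
     O1 n' * O3 n' * F4 * (f_trunc 2 (2 * n') * I2) by ring.
  by apply: congM; [apply: cong_refl | apply: congM => //; apply: cong_refl].
by rewrite -[X in cong _ _ X]mulr1; apply: congM => //; apply: cong_refl.
Qed.

Local Close Scope ring_scope.

Theorem mainTheorem3 (n i : nat) (hi : (1 <= i)%N) :
  (3 %| abar (3 * i + 2) (3 * n + 2))%Z.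
Proof. exact: main_aux. Qed.
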